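(* Let $\mathscr{A}=\{A_1,\ldots,A_r\}$ be an irreducible set of real $d\times d$ matrices, $\|\cdot\|$ a norm on $\mathbb{R}^d$, $p\ge d-1$ and $n\ge1$ integers, and $\mu>1$. Suppose that for some $A_{i_1},\ldots,A_{i_n}\in\mathscr{A}$ and some nonzero $x_*\in\mathbb{R}^d$, \[ \|A_{i_n}\cdots A_{i_1}x_*\|\ge \mu\,\eta_p(\mathscr{A})\,\rho(\mathscr{A})^n\,\|x_*\|,\qquad \eta_p(\mathscr{A})=\frac{\max\{1,\rho(\mathscr{A})^p\}}{\chi_p(\mathscr{A})}. \] Then for every nonzero $x\in\mathbb{R}^d$ there is $F_x\in\mathscr{A}_\infty$ with $n\le \mathrm{len}(F_x)\le n+p$ and \[ \|F_x x\|\ge \big(\eta\,\rho(\mathscr{A})\big)^{\mathrm{len}(F_x)}\|x\|,\qquad\text{where }\eta=\mu^{1/(n+p)}>1. \]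
   Context: Irreducible: the matrices in $\mathscr{A}$ have no common invariant subspace other than $\{0\}$ and $\mathbb{R}^d$. $\mathscr{A}^k$ is the set of products of $k$ matrices from $\mathscr{A}$, $\mathscr{A}^0=\{I\}$; matrices carry the induced operator norm, $\|\mathscr{A}^n\|=\max_{A\in\mathscr{A}^n}\|A\|$, and $\rho(\mathscr{A})=\limsup_{n\to\infty}\|\mathscr{A}^n\|^{1/n}$ is the joint spectral radius. $\mathscr{A}_\infty=\bigcup_{k\ge1}\mathscr{A}^k$, elements regarded as products of factors from $\mathscr{A}$ whose number of factors is the length $\mathrm{len}$. $\mathscr{A}_p=\bigcup_{k=0}^p\mathscr{A}^k$, $\mathscr{A}_p(x)=\{Ax:A\in\mathscr{A}_p\}$, $\mathbf{S}(t)$ the closed $\|\cdot\|$-ball of radius $t$ about $0$, and $\chi_p(\mathscr{A})=\inf_{\|x\|=1}\sup\{t\ge0:\mathbf{S}(t)\subseteq\mathrm{conv}(\mathscr{A}_p(x)\cup\mathscr{A}_p(-x))\}$ is the $p$-measure of irreducibility. *)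

(* Defs.v *)
From Stdlib Require Import Reals Lra Lia List Classical ClassicalEpsilon.
Open Scope R_scope.

(* Vectors of R^d are represented as functions nat -> R vanishing at indices >= d;
   d x d matrices as functions nat -> nat -> R (only entries i,j < d are used). *)
Definition Vec := nat -> R.
Definition Mat := nat -> nat -> R.

Definition inRd (d : nat) (x : Vec) : Prop := forall i, (d <= i)%nat -> x i = 0.
Definition vzero (x : Vec) : Prop := forall i, x i = 0.

Fixpoint sumR (k : nat) (f : nat -> R) : R :=
  match k with O => 0 | S k' => sumR k' f + f k' end.

Definition mv (d : nat) (A : Mat) (x : Vec) : Vec :=
  fun i => if Nat.ltb i d then sumR d (fun j => A i j * x j) else 0.

(* the product A_{i_n} ... A_{i_1} applied to x, for the word w = [A_{i_1}; ...; A_{i_n}] *)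
Definition applyw (d : nat) (w : list Mat) (x : Vec) : Vec :=
  fold_left (fun v A => mv d A v) w x.

Definition word_of (As : list Mat) (w : list Mat) : Prop := forall A, In A w -> In A As.

Definition is_norm (d : nat) (N : Vec -> R) : Prop :=
  (forall x, inRd d x -> 0 <= N x) /\
  (forall x, inRd d x -> N x = 0 -> vzero x) /\
  (forall c x, inRd d x -> N (fun i => c * x i) = Rabs c * N x) /\
  (forall x y, inRd d x -> inRd d y -> N (fun i => x i + y i) <= N x + N y).

Definition subspace (d : nat) (V : Vec -> Prop) : Prop :=
  (forall x, V x -> inRd d x) /\ V (fun _ => 0) /\
  (forall x y, V x -> V y -> V (fun i => x i + y i)) /\
  (forall c x, V x -> V (fun i => c * x i)).

Definition irreducible (d : nat) (As : list Mat) : Prop :=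
  forall V, subspace d V ->
    (forall A x, In A As -> V x -> V (mv d A x)) ->
    (forall x, V x -> vzero x) \/ (forall x, inRd d x -> V x).

(* supremum / infimum of a set of reals (0 if empty or unbounded) *)
Definition Rsup (E : R -> Prop) : R :=
  match excluded_middle_informative (bound E /\ exists x, E x) with
  | left H => proj1_sig (completeness E (proj1 H) (proj2 H))
  | right _ => 0
  end.
Definition Rinf (E : R -> Prop) : R := - Rsup (fun x => E (- x)).

Definition limsup (a : nat -> R) : R :=
  Rinf (fun y => exists n, y = Rsup (fun z => exists k, (n <= k)%nat /\ z = a k)).

Definition opnorm (d : nat) (N : Vec -> R) (f : Vec -> Vec) : R :=
  Rsup (fun t => exists x, inRd d x /\ N x = 1 /\ t = N (f x)).

Definition setnorm (d : nat) (N : Vec -> R) (As : list Mat) (k : nat) : R :=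
  Rsup (fun t => exists w, word_of As w /\ length w = k /\ t = opnorm d N (applyw d w)).

Definition rootn (a : R) (n : nat) : R :=
  if Req_EM_T a 0 then 0 else Rpower a (/ INR n).

Definition jsr (d : nat) (N : Vec -> R) (As : list Mat) : R :=
  limsup (fun n => rootn (setnorm d N As n) n).

Definition in_conv (P : Vec -> Prop) (y : Vec) : Prop :=
  exists l : list (R * Vec),
    Forall (fun c => 0 <= fst c /\ P (snd c)) l /\
    fold_right (fun c s => fst c + s) 0 l = 1 /\
    forall i, y i = fold_right (fun c s => fst c * snd c i + s) 0 l.

Definition orbit_pm (d : nat) (As : list Mat) (p : nat) (x : Vec) (z : Vec) : Prop :=
  exists w, word_of As w /\ (length w <= p)%nat /\
    (z = applyw d w x \/ z = applyw d w (fun i => - x i)).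

Definition chi (d : nat) (N : Vec -> R) (As : list Mat) (p : nat) : R :=
  Rinf (fun c => exists x, inRd d x /\ N x = 1 /\
    c = Rsup (fun t => 0 <= t /\
          forall y, inRd d y -> N y <= t -> in_conv (orbit_pm d As p x) y)).

Definition eta_p (d : nat) (N : Vec -> R) (As : list Mat) (p : nat) : R :=
  Rmax 1 (jsr d N As ^ p) / chi d N As p.

(* Main.v *)
Require Import Defs.
From Stdlib Require Import Reals Lra Lia List Classical ClassicalEpsilon FunctionalExtensionality.
Open Scope R_scope.


Definition vadd (u v : Vec) : Vec := fun i => u i + v i.
Definition vscal (c : R) (u : Vec) : Vec := fun i => c * u i.
Definition v0 : Vec := fun _ => 0.

Lemma sumR_ext k f g : (forall j, (j < k)%nat -> f j = g j) -> sumR k f = sumR k g.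
Proof. induction k; simpl; intros H; auto. rewrite IHk by (intros; apply H; lia). rewrite H by lia; auto. Qed.

Lemma sumR_plus k f g : sumR k (fun j => f j + g j) = sumR k f + sumR k g.
Proof. induction k; simpl; [lra|]. rewrite IHk; lra. Qed.

Lemma sumR_scal k c f : sumR k (fun j => c * f j) = c * sumR k f.
Proof. induction k; simpl; [lra|]. rewrite IHk; lra. Qed.

Lemma sumR_zero k f : (forall j, (j < k)%nat -> f j = 0) -> sumR k f = 0.
Proof. intros H. rewrite (sumR_ext k f (fun _ => 0)) by auto. induction k; simpl; [lra|]. rewrite IHk by (intros; apply H; lia). lra. Qed.

Lemma sumR_abs k f : Rabs (sumR k f) <= sumR k (fun j => Rabs (f j)).
Proof. induction k; simpl. rewrite Rabs_R0; lra. eapply Rle_trans; [apply Rabs_triang|]. lra. Qed.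

Lemma sumR_le k f g : (forall j, (j < k)%nat -> f j <= g j) -> sumR k f <= sumR k g.
Proof. induction k; simpl; intros H; [lra|]. assert (H1 := H k (Nat.lt_succ_diag_r k)). assert (sumR k f <= sumR k g) by (apply IHk; intros; apply H; lia). lra. Qed.

Lemma sumR_nonneg k f : (forall j, (j < k)%nat -> 0 <= f j) -> 0 <= sumR k f.
Proof. intros H. replace 0 with (sumR k (fun _ => 0)) by (apply sumR_zero; auto). apply sumR_le; auto. Qed.

Lemma sumR_const k c : sumR k (fun _ => c) = INR k * c.
Proof. induction k; simpl sumR. simpl; lra. rewrite IHk, S_INR; lra. Qed.

Lemma sumR_delta k (v : nat -> R) j : (j < k)%nat ->
  sumR k (fun i => v i * (if Nat.eqb i j then 1 else 0)) = v j.
Proof.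
  induction k as [|k IHk]; intros H; [lia|]. simpl. destruct (Nat.eqb k j) eqn:E.
  - apply Nat.eqb_eq in E; subst j. rewrite sumR_zero. lra.
    intros i Hi. destruct (Nat.eqb i k) eqn:E'; [apply Nat.eqb_eq in E'; lia| lra].
  - apply Nat.eqb_neq in E. rewrite IHk by lia. lra.
Qed.

Lemma sumR_swap k m (f : nat -> nat -> R) :
  sumR k (fun i => sumR m (fun j => f i j)) = sumR m (fun j => sumR k (fun i => f i j)).
Proof. induction k; simpl. rewrite sumR_zero; auto. rewrite IHk, <- sumR_plus. auto. Qed.

Lemma sumR_trunc m k f : (k <= m)%nat -> (forall j, (k <= j < m)%nat -> f j = 0) -> sumR m f = sumR k f.
Proof. induction m; intros H1 H2. replace k with 0%nat by lia; auto.
  destruct (Nat.eq_dec k (S m)). subst; auto. simpl. rewrite IHm by (try lia; intros; apply H2; lia).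
  rewrite H2 by lia. lra. Qed.

Definition skip (k0 k : nat) : nat := if Nat.ltb k k0 then k else S k.

Lemma sumR_skip m k0 f : (k0 < m)%nat -> sumR m f = sumR (m - 1) (fun k => f (skip k0 k)) + f k0.
Proof.
  induction m; intros H; [lia|]. destruct (Nat.eq_dec k0 m).
  - subst. simpl. replace (m - 0)%nat with m by lia. f_equal. apply sumR_ext. intros j Hj.
    unfold skip. destruct (Nat.ltb_spec j m); auto; lia.
  - simpl sumR at 1. rewrite IHm by lia. destruct m; [lia|].
    replace (S (S m) - 1)%nat with (S m) by lia. replace (S m - 1)%nat with m by lia.
    simpl sumR. unfold skip at 3. destruct (Nat.ltb_spec m k0); [lia|]. lra.
Qed.

Lemma mv_inRd d A x : inRd d (mv d A x).
Proof. intros i Hi. unfold mv. destruct (Nat.ltb_spec i d); auto; lia. Qed.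

Lemma applyw_inRd d w x : inRd d x -> inRd d (applyw d w x).
Proof. unfold applyw. revert x. induction w; simpl; intros x H; auto. apply IHw, mv_inRd. Qed.

Lemma applyw_cons d A w x : applyw d (A :: w) x = applyw d w (mv d A x).
Proof. reflexivity. Qed.

Lemma applyw_app d G w x : applyw d (G ++ w) x = applyw d w (applyw d G x).
Proof. unfold applyw. apply fold_left_app. Qed.

Lemma mv_add d A u v : mv d A (vadd u v) = vadd (mv d A u) (mv d A v).
Proof. apply functional_extensionality; intro i. unfold mv, vadd.
  destruct (Nat.ltb i d); [|lra]. rewrite <- sumR_plus. apply sumR_ext; intros; lra. Qed.

Lemma mv_scal d A c u : mv d A (vscal c u) = vscal c (mv d A u).
Proof. apply functional_extensionality; intro i. unfold mv, vscal.
  destruct (Nat.ltb i d); [|lra]. rewrite <- sumR_scal. apply sumR_ext; intros; lra. Qed.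

Lemma mv_0 d A : mv d A v0 = v0.
Proof. apply functional_extensionality; intro i. unfold mv, v0.
  destruct (Nat.ltb i d); auto. apply sumR_zero; intros; lra. Qed.

Lemma applyw_add d w u v : applyw d w (vadd u v) = vadd (applyw d w u) (applyw d w v).
Proof. revert u v; induction w; intros; auto. rewrite !applyw_cons, mv_add; auto. Qed.

Lemma applyw_scal d w c u : applyw d w (vscal c u) = vscal c (applyw d w u).
Proof. revert u; induction w; intros; auto. rewrite !applyw_cons, mv_scal; auto. Qed.

Lemma applyw_0 d w : applyw d w v0 = v0.
Proof. induction w; auto. rewrite applyw_cons, mv_0; auto. Qed.

Lemma opp_vscal (x : Vec) : (fun i => - x i) = vscal (-1) x.
Proof. apply functional_extensionality; intro; unfold vscal; lra. Qed.

Lemma abs_le_between x a : Rabs x <= a -> -a <= x <= a.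
Proof. unfold Rabs; destruct Rcase_abs; intros; lra. Qed.


Ltac vext := apply functional_extensionality; intro; unfold vadd, vscal, v0; try ring.

Lemma inRd_vadd d u v : inRd d u -> inRd d v -> inRd d (vadd u v).
Proof. intros H1 H2 i Hi; unfold vadd; rewrite H1, H2; auto; lra. Qed.
Lemma inRd_vscal d c u : inRd d u -> inRd d (vscal c u).
Proof. intros H1 i Hi; unfold vscal; rewrite H1; auto; lra. Qed.
Lemma inRd_v0 d : inRd d v0.
Proof. intros i _; reflexivity. Qed.

Section Norm.
Variables (d : nat) (N : Vec -> R) (HN : is_norm d N).

Lemma N_nonneg x : inRd d x -> 0 <= N x.
Proof. destruct HN as [H _]; auto. Qed.
Lemma N_scal c x : inRd d x -> N (vscal c x) = Rabs c * N x.
Proof. destruct HN as [_ [_ [H _]]]; apply H. Qed.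
Lemma N_add x y : inRd d x -> inRd d y -> N (vadd x y) <= N x + N y.
Proof. destruct HN as [_ [_ [_ H]]]; apply H. Qed.
Lemma N_zero x : inRd d x -> N x = 0 -> vzero x.
Proof. destruct HN as [_ [H _]]; apply H. Qed.
Lemma N_v0 : N v0 = 0.
Proof. replace v0 with (vscal 0 v0) by vext. rewrite N_scal by apply inRd_v0. rewrite Rabs_R0; ring. Qed.
Lemma N_opp x : inRd d x -> N (vscal (-1) x) = N x.
Proof. intros H; rewrite N_scal by auto. rewrite Rabs_left by lra. ring. Qed.
Lemma N_pos x : inRd d x -> ~ vzero x -> 0 < N x.
Proof. intros H1 H2. destruct (N_nonneg x H1); auto. exfalso; apply H2, N_zero; auto. Qed.
Lemma N_rev x y : inRd d x -> inRd d y -> N x <= N y + N (vadd x (vscal (-1) y)).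
Proof. intros Hx Hy. replace x with (vadd y (vadd x (vscal (-1) y))) at 1 by vext.
  apply N_add; auto. apply inRd_vadd; auto; apply inRd_vscal; auto. Qed.
End Norm.

Definition vsum (l : list (R * Vec)) : Vec :=
  fold_right (fun c s => vadd (vscal (fst c) (snd c)) s) v0 l.

Lemma in_conv_vsum P y : in_conv P y -> exists l, Forall (fun c => 0 <= fst c /\ P (snd c)) l /\
  fold_right (fun c s => fst c + s) 0 l = 1 /\ y = vsum l.
Proof. intros [l [H1 [H2 H3]]]. exists l; repeat split; auto. apply functional_extensionality; intro i.
  rewrite H3. clear. induction l; simpl; auto. unfold vadd, vscal; rewrite IHl; auto. Qed.

Lemma applyw_vsum d w l : applyw d w (vsum l) = vsum (map (fun c => (fst c, applyw d w (snd c))) l).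
Proof. induction l; simpl. apply applyw_0. rewrite applyw_add, applyw_scal, IHl; auto. Qed.

Lemma vsum_inRd d l : Forall (fun c => inRd d (snd c)) l -> inRd d (vsum l).
Proof. induction 1; simpl. apply inRd_v0. apply inRd_vadd; auto. apply inRd_vscal; auto. Qed.

Lemma N_vsum d N (HN : is_norm d N) l : Forall (fun c => inRd d (snd c)) l ->
  N (vsum l) <= fold_right (fun c s => Rabs (fst c) * N (snd c) + s) 0 l.
Proof. induction 1; simpl. rewrite (N_v0 d N HN); lra.
  eapply Rle_trans. apply (N_add d N HN). apply inRd_vscal; auto. apply vsum_inRd; auto.
  rewrite (N_scal d N HN) by auto. lra. Qed.

Lemma orbit_inRd d As p x z : inRd d x -> orbit_pm d As p x z -> inRd d z.
Proof. intros Hx [G [_ [_ [-> | ->]]]]; apply applyw_inRd; auto.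
  rewrite opp_vscal; apply inRd_vscal; auto. Qed.

Lemma hull_bound d As p N (HN : is_norm d N) x w M : inRd d x ->
  (forall G, word_of As G -> (length G <= p)%nat -> N (applyw d w (applyw d G x)) <= M) ->
  forall y, in_conv (orbit_pm d As p x) y -> N (applyw d w y) <= M.
Proof.
  intros Hx HM y Hy. destruct (in_conv_vsum _ _ Hy) as [l [H1 [H2 ->]]].
  rewrite applyw_vsum. eapply Rle_trans. apply (N_vsum d N HN).
  { apply Forall_map. eapply Forall_impl; [|exact H1]. intros c [_ Hc]; simpl. apply applyw_inRd.
    eapply orbit_inRd; eauto. }
  rewrite <- (Rmult_1_r M). rewrite <- H2. clear H2 Hy.
  induction H1 as [|c l [Hc1 Hc2] Hl IH]; simpl. lra.
  assert (N (applyw d w (snd c)) <= M).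
  { destruct Hc2 as [G [HG1 [HG2 [-> | ->]]]]. auto.
    rewrite opp_vscal, applyw_scal, applyw_scal, (N_opp d N HN); auto.
    apply applyw_inRd, applyw_inRd; auto. }
  rewrite Rabs_right by lra. assert (0 <= fst c * (M - N (applyw d w (snd c)))) by (apply Rmult_le_pos; lra). nra.
Qed.


Definition lcomb d (l : list (R * list Mat)) (x : Vec) : Vec :=
  fold_right (fun c s => vadd (vscal (fst c) (applyw d (snd c) x)) s) v0 l.
Definition sumabs (l : list (R * list Mat)) : R := fold_right (fun c s => Rabs (fst c) + s) 0 l.

Lemma lcomb_app d l1 l2 x : lcomb d (l1 ++ l2) x = vadd (lcomb d l1 x) (lcomb d l2 x).
Proof. induction l1; simpl. vext. rewrite IHl1. vext. Qed.
Lemma lcomb_scal d a l x : lcomb d (map (fun c => (a * fst c, snd c)) l) x = vscal a (lcomb d l x).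
Proof. induction l; simpl. vext. rewrite IHl. vext. Qed.
Lemma lcomb_addx d l x y : lcomb d l (vadd x y) = vadd (lcomb d l x) (lcomb d l y).
Proof. induction l; simpl. vext. rewrite IHl, applyw_add. vext. Qed.
Lemma lcomb_scalx d l c x : lcomb d l (vscal c x) = vscal c (lcomb d l x).
Proof. induction l; simpl. vext. rewrite IHl, applyw_scal. vext. Qed.
Lemma applyw_lcomb d w l x : applyw d w (lcomb d l x) = lcomb d (map (fun c => (fst c, snd c ++ w)) l) x.
Proof. induction l; simpl. apply applyw_0. rewrite applyw_add, applyw_scal, IHl, applyw_app; auto. Qed.
Lemma lcomb_inRd d l x : inRd d x -> inRd d (lcomb d l x).
Proof. intros H; induction l; simpl. apply inRd_v0. apply inRd_vadd; auto. apply inRd_vscal, applyw_inRd; auto. Qed.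
Lemma sumabs_app l1 l2 : sumabs (l1 ++ l2) = sumabs l1 + sumabs l2.
Proof. induction l1; simpl; try rewrite IHl1; lra. Qed.
Lemma sumabs_scal a l : sumabs (map (fun c => (a * fst c, snd c)) l) = Rabs a * sumabs l.
Proof. induction l; simpl. lra. rewrite IHl, Rabs_mult; lra. Qed.
Lemma sumabs_nonneg l : 0 <= sumabs l.
Proof. induction l; simpl. lra. pose proof (Rabs_pos (fst a)); lra. Qed.

Lemma conv_builder d As p x l : inRd d x ->
  Forall (fun c => word_of As (snd c) /\ (length (snd c) <= p)%nat) l -> sumabs l <= 1 ->
  in_conv (orbit_pm d As p x) (lcomb d l x).
Proof.
  intros Hx Hl Hs.
  set (f := fun c : R * list Mat => (Rabs (fst c),
     if Rle_dec 0 (fst c) then applyw d (snd c) x else applyw d (snd c) (fun i => - x i))).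
  exists (map f l ++ ((1 - sumabs l) / 2, x) :: ((1 - sumabs l) / 2, fun i => - x i) :: nil).
  split; [|split].
  - apply Forall_app; split.
    + apply Forall_map. eapply Forall_impl; [|exact Hl]. intros c [H1 H2]. unfold f; simpl.
      split. apply Rabs_pos. exists (snd c). split; auto. split; auto.
      destruct (Rle_dec 0 (fst c)); auto.
    + assert (Hw : word_of As nil) by (intros A []).
      assert (0 <= (1 - sumabs l) / 2) by lra.
      constructor; [split; simpl; auto; exists nil; repeat split; simpl; auto; lia|].
      constructor; [split; simpl; auto; exists nil; repeat split; simpl; auto; lia|].
      constructor.
  - rewrite fold_right_app. simpl. 
    assert (forall s, fold_right (fun c s => fst c + s) s (map f l) = sumabs l + s).
    { intros s; clear Hl Hs; induction l; simpl; auto. lra. rewrite IHl; lra. }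
    rewrite H. lra.
  - intros i. rewrite fold_right_app. simpl.
    assert (forall s, fold_right (fun c s => fst c * snd c i + s) s (map f l) = lcomb d l x i + s).
    { intros s; clear Hl Hs; induction l; simpl; auto. unfold v0; lra. rewrite IHl.
      unfold f; simpl. unfold vadd, vscal. destruct (Rle_dec 0 (fst a)).
      rewrite Rabs_right by lra; lra.
      rewrite opp_vscal, applyw_scal. unfold vscal. rewrite Rabs_left by lra. lra. }
    rewrite H. lra.
Qed.

Fixpoint words (As : list Mat) (k : nat) : list (list Mat) :=
  match k with
  | O => nil :: nil
  | S k' => nil :: flat_map (fun A => map (cons A) (words As k')) As
  end.

Lemma words_complete As k G : word_of As G -> (length G <= k)%nat -> In G (words As k).
Proof.
  revert G; induction k; intros G H1 H2.
  - destruct G; simpl in *; auto; lia.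
  - destruct G as [|A G]; simpl; auto. right. apply in_flat_map. exists A. split.
    apply H1; simpl; auto. apply in_map. apply IHk. intros B HB; apply H1; simpl; auto. simpl in H2; lia.
Qed.

Lemma words_sound As k G : In G (words As k) -> word_of As G /\ (length G <= k)%nat.
Proof.
  revert G; induction k; intros G H; simpl in H.
  - destruct H as [<-|[]]. split; simpl; auto. intros A [].
  - destruct H as [<-|H]. split; simpl; [intros A []|lia].
    apply in_flat_map in H. destruct H as [A [HA H]]. apply in_map_iff in H.
    destruct H as [G' [<- HG']]. apply IHk in HG'. destruct HG' as [H1 H2].
    split; simpl; [|lia]. intros B [<-|HB]; auto.
Qed.

Lemma list_max {T} (f : T -> R) (L : list T) : L <> nil ->
  exists G, In G L /\ forall G', In G' L -> f G' <= f G.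
Proof.
  induction L as [|a L IH]; intros H; [congruence|]. destruct L as [|b L].
  - exists a; split; simpl; auto. intros G' [<-|[]]; lra.
  - destruct IH as [G [HG1 HG2]]; [congruence|].
    destruct (Rle_dec (f a) (f G)).
    + exists G; split; [right; auto|]. intros G' [<-|HG']; auto.
    + exists a; split; [left; auto|]. intros G' [<-|HG']. lra. specialize (HG2 G' HG'); lra.
Qed.

Lemma words_max As p (f : list Mat -> R) :
  exists G, word_of As G /\ (length G <= p)%nat /\
    forall G', word_of As G' -> (length G' <= p)%nat -> f G' <= f G.
Proof.
  destruct (list_max f (words As p)) as [G [H1 H2]].
  { destruct p; simpl; congruence. }
  apply words_sound in H1. exists G; split; [tauto|split;[tauto|]].
  intros G' A B; apply H2, words_complete; auto.
Qed.


Lemma Rsup_spec E : bound E -> (exists x, E x) -> is_lub E (Rsup E).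
Proof. intros H1 H2. unfold Rsup. destruct excluded_middle_informative as [H|H].
  destruct (completeness E _ _); simpl; auto. tauto. Qed.

Lemma Rsup_out E : ~ (bound E /\ exists x, E x) -> Rsup E = 0.
Proof. intros H. unfold Rsup. destruct excluded_middle_informative; tauto. Qed.

Lemma Rsup_nonneg E : (forall x, E x -> 0 <= x) -> 0 <= Rsup E.
Proof. intros H. destruct (classic (bound E /\ exists x, E x)) as [[H1 [x Hx]]|H1].
  - destruct (Rsup_spec E H1 (ex_intro _ x Hx)) as [Hu _]. specialize (Hu x Hx). specialize (H x Hx). lra.
  - rewrite Rsup_out; auto; lra. Qed.

Lemma rootn_nonneg a n : 0 <= rootn a n.
Proof. unfold rootn. destruct Req_EM_T. lra. unfold Rpower. left; apply exp_pos. Qed.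

Lemma jsr_nonneg d N As : 0 <= jsr d N As.
Proof.
  unfold jsr, limsup, Rinf. set (E := fun x : R => _).
  assert (Rsup E <= 0).
  { destruct (classic (bound E /\ exists x, E x)) as [[H1 H2]|H1].
    - destruct (Rsup_spec E H1 H2) as [_ Hl]. apply Hl. intros y [n Hy].
      assert (0 <= - y). rewrite Hy. apply Rsup_nonneg. intros z [k [_ ->]]. apply rootn_nonneg.
      lra.
    - rewrite Rsup_out; auto; lra. }
  lra.
Qed.


Lemma dep d : forall m (ws : nat -> Vec), (d < m)%nat -> (forall k, (k < m)%nat -> inRd d (ws k)) ->
  exists b : nat -> R, (exists k, (k < m)%nat /\ b k <> 0) /\
    forall i, sumR m (fun k => b k * ws k i) = 0.
Proof.
  induction d as [|d IH]; intros m ws Hm Hw.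
  - exists (fun k => if Nat.eqb k 0 then 1 else 0). split.
    + exists 0%nat. split; [lia|]. simpl; lra.
    + intros i. apply sumR_zero. intros j Hj. rewrite (Hw j Hj i) by lia. lra.
  - destruct (classic (forall k, (k < m)%nat -> ws k d = 0)) as [H0|H0].
    + apply IH; [lia|]. intros k Hk i Hi. destruct (Nat.eq_dec i d). subst; auto. apply Hw; auto; lia.
    + apply not_all_ex_not in H0. destruct H0 as [k0 H0].
      assert (Hk0 : (k0 < m)%nat) by (destruct (Nat.lt_ge_cases k0 m); auto; exfalso; apply H0; intros; lia).
      assert (Hne : ws k0 d <> 0) by (intro E; apply H0; auto).
      set (ws' := fun k => fun i => ws (skip k0 k) i - (ws (skip k0 k) d / ws k0 d) * ws k0 i).
      assert (Hsk : forall k, (k < m - 1)%nat -> (skip k0 k < m)%nat).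
      { intros k Hk; unfold skip; destruct (Nat.ltb_spec k k0); lia. }
      destruct (IH (m - 1)%nat ws') as [b' [[k1 [Hk1 Hb1]] Hb2]]; [lia| |].
      { intros k Hk i Hi. unfold ws'. destruct (Nat.eq_dec i d).
        - subst. field; auto.
        - rewrite (Hw _ (Hsk k Hk) i), (Hw _ Hk0 i) by lia. lra. }
      set (c := - sumR (m - 1) (fun k => b' k * (ws (skip k0 k) d / ws k0 d))).
      exists (fun k => if Nat.ltb k k0 then b' k else if Nat.eqb k k0 then c else b' (k - 1)%nat).
      assert (Hbs : forall k, (fun k => if Nat.ltb k k0 then b' k else if Nat.eqb k k0 then c else b' (k - 1)%nat) (skip k0 k) = b' k).
      { intros k; unfold skip. destruct (Nat.ltb_spec k k0). destruct (Nat.ltb_spec k k0); auto; lia.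
        destruct (Nat.ltb_spec (S k) k0); [lia|]. destruct (Nat.eqb_spec (S k) k0); [lia|]. f_equal; lia. }
      cbv beta in Hbs. split.
      * exists (skip k0 k1). split; auto. rewrite Hbs; auto.
      * intros i. rewrite (sumR_skip m k0) by auto.
        rewrite (sumR_ext _ _ (fun k => b' k * ws' k i + (b' k * (ws (skip k0 k) d / ws k0 d)) * ws k0 i)).
        2:{ intros j Hj. cbv beta. rewrite Hbs. unfold ws'. ring. }
        rewrite sumR_plus, Hb2.
        rewrite (sumR_ext _ (fun k => b' k * (ws (skip k0 k) d / ws k0 d) * ws k0 i)
                           (fun k => ws k0 i * (b' k * (ws (skip k0 k) d / ws k0 d)))) by (intros; ring).
        rewrite sumR_scal. destruct (Nat.ltb_spec k0 k0); [lia|]. rewrite Nat.eqb_refl.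
        unfold c. ring.
Qed.


Definition Sp d As k x v := inRd d v /\ exists l, Forall (fun c => word_of As (snd c) /\ (length (snd c) <= k)%nat) l /\ v = lcomb d l x.

Lemma last_nonzero m (b : nat -> R) : (exists k, (k < m)%nat /\ b k <> 0) ->
  exists j, (j < m)%nat /\ b j <> 0 /\ forall k, (j < k < m)%nat -> b k = 0.
Proof.
  induction m; intros [k [Hk Hb]]; [lia|].
  destruct (Req_dec (b m) 0) as [E|E].
  - destruct IHm as [j [H1 [H2 H3]]]. exists k; split; auto. destruct (Nat.eq_dec k m); subst; [contradiction|lia].
    exists j; repeat split; auto. intros k' Hk'. destruct (Nat.eq_dec k' m); subst; auto. apply H3; lia.
  - exists m; repeat split; auto. intros; lia.
Qed.

Section Span.
Variables (d : nat) (As : list Mat) (x : Vec) (Hx : inRd d x).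

Lemma Sp_mono k k' v : (k <= k')%nat -> Sp d As k x v -> Sp d As k' x v.
Proof. intros H [H1 [l [H2 H3]]]. split; auto. exists l; split; auto.
  eapply Forall_impl; [|exact H2]. intros c [A B]; split; auto; lia. Qed.

Lemma Sp_add k u v : Sp d As k x u -> Sp d As k x v -> Sp d As k x (vadd u v).
Proof. intros [H1 [l1 [H2 ->]]] [H4 [l2 [H5 ->]]]. split. apply inRd_vadd; auto.
  exists (l1 ++ l2). split. apply Forall_app; auto. rewrite lcomb_app; auto. Qed.

Lemma Sp_scal k c u : Sp d As k x u -> Sp d As k x (vscal c u).
Proof. intros [H1 [l1 [H2 ->]]]. split. apply inRd_vscal; auto.
  exists (map (fun c0 => (c * fst c0, snd c0)) l1). split. apply Forall_map. auto.
  rewrite lcomb_scal; auto. Qed.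

Lemma Sp_0 k : Sp d As k x v0.
Proof. split. apply inRd_v0. exists nil; split; auto. Qed.

Lemma Sp_x : Sp d As 0 x x.
Proof. split; auto. exists ((1, nil) :: nil). split. constructor; [|constructor]. simpl; split; auto. intros A [].
  simpl. unfold lcomb; simpl. vext; try (unfold applyw; simpl; ring). Qed.

Lemma Sp_mv k A v : In A As -> Sp d As k x v -> Sp d As (S k) x (mv d A v).
Proof. intros HA [H1 [l [H2 ->]]]. split. apply mv_inRd.
  exists (map (fun c => (fst c, snd c ++ A :: nil)) l). split.
  - apply Forall_map. eapply Forall_impl; [|exact H2]. intros c [B C]; simpl. split.
    intros A' HA'. apply in_app_or in HA'. destruct HA' as [?|[<-|[]]]; auto.
    rewrite length_app; simpl; lia.
  - rewrite <- applyw_lcomb. reflexivity. Qed.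

Lemma Sp_sum k m (b : nat -> R) (W : nat -> Vec) : (forall j, (j < m)%nat -> Sp d As k x (W j)) ->
  Sp d As k x (fun i => sumR m (fun j => b j * W j i)).
Proof. induction m; intros H. simpl. apply Sp_0.
  replace (fun i => sumR (S m) (fun j => b j * W j i)) with (vadd (fun i => sumR m (fun j => b j * W j i)) (vscal (b m) (W m))) by (apply functional_extensionality; intro; unfold vadd, vscal; simpl; ring).
  apply Sp_add. apply IHm; intros; apply H; lia. apply Sp_scal, H; lia. Qed.

Variables (p : nat) (Hirr : irreducible d As) (Hp : (d - 1 <= p)%nat) (Hx0 : ~ vzero x).

Lemma spanning : exists k, (k <= p)%nat /\ forall v, inRd d v -> Sp d As k x v.
Proof.
  apply NNPP; intro H.
  assert (Hs : forall k, (k < d)%nat -> exists v, Sp d As (S k) x v /\ ~ Sp d As k x v).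
  { intros k Hk. apply NNPP; intro H1. 
    assert (Hst : forall v, Sp d As (S k) x v -> Sp d As k x v).
    { intros v Hv. apply NNPP; intro H2. apply H1; exists v; auto. }
    destruct (Hirr (Sp d As k x)) as [H3|H3].
    - split; [intros v [Hv _]; auto|]. split; [apply (Sp_0 k)|]. split.
      intros u v Hu Hv; apply (Sp_add k u v Hu Hv). intros c u Hu; apply (Sp_scal k c u Hu).
    - intros A v HA Hv. apply Hst, Sp_mv; auto.
    - apply Hx0, H3. apply (Sp_mono 0); [lia|apply Sp_x].
    - apply H. exists k. split; [lia|auto]. }
  destruct (choice (fun k v => (k < d)%nat -> Sp d As (S k) x v /\ ~ Sp d As k x v)) as [g Hg].
  { intros k. destruct (Nat.lt_ge_cases k d) as [Hk|Hk].
    destruct (Hs k Hk) as [v Hv]; exists v; auto. exists v0; intros; lia. }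
  set (W := fun j => if Nat.eqb j 0 then x else g (j - 1)%nat).
  assert (HW : forall j, (j <= d)%nat -> Sp d As j x (W j)).
  { intros j Hj. unfold W. destruct j. simpl. apply Sp_x. simpl. replace (j - 0)%nat with j by lia. apply Hg; lia. }
  destruct (dep d (S d) W) as [b [Hb1 Hb2]]; [lia| intros k Hk; apply (HW k); lia |].
  destruct (last_nonzero _ _ Hb1) as [js [Hj1 [Hj2 Hj3]]].
  assert (Hsum : forall i, sumR js (fun j => b j * W j i) + b js * W js i = 0).
  { intros i. rewrite <- (Hb2 i). rewrite (sumR_trunc (S d) (S js)). reflexivity. lia.
    intros k Hk. rewrite (Hj3 k) by lia. ring. }
  assert (HWs : W js = vscal (- / b js) (fun i => sumR js (fun j => b j * W j i))).
  { vext. specialize (Hsum x0). replace (W js x0) with (/ b js * (b js * W js x0)) by (field; auto).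
    replace (b js * W js x0) with (- sumR js (fun j => b j * W j x0)) by lra. ring. }
  destruct js as [|j'].
  - apply Hx0. intros i. specialize (Hsum i). simpl in Hsum. unfold W in Hsum; simpl in Hsum.
    apply (Rmult_eq_reg_l (b 0%nat)); auto. lra.
  - assert (Hin : Sp d As j' x (W (S j'))).
    { rewrite HWs. apply Sp_scal, Sp_sum. intros j Hj. destruct j. apply (Sp_mono 0); [lia|apply Sp_x].
      apply (Sp_mono (S j)); [lia|]. apply HW; lia. }
    unfold W in Hin; simpl in Hin. replace (j' - 0)%nat with j' in Hin by lia.
    destruct (Hg j') as [_ Hn]; [lia|]. contradiction.
Qed.
End Span.


Definition inbox d (lo hi : Vec) (x : Vec) := inRd d x /\ forall i, (i < d)%nat -> lo i <= x i <= hi i.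
Definition good d (P : Vec -> R -> Prop) lo hi := exists δ, 0 < δ /\ forall x, inbox d lo hi x -> P x δ.
Definition Pmono (P : Vec -> R -> Prop) := forall x δ δ', P x δ -> 0 < δ' <= δ -> P x δ'.
Definition upd (f : Vec) j a : Vec := fun i => if Nat.eqb i j then a else f i.

Section Compact.
Variables (d : nat) (P : Vec -> R -> Prop) (HP : Pmono P).

Lemma good_union lo hi j mid : (j < d)%nat -> good d P lo (upd hi j mid) -> good d P (upd lo j mid) hi -> good d P lo hi.
Proof.
  intros Hj [d1 [H1 H1']] [d2 [H2 H2']]. exists (Rmin d1 d2). split. apply Rmin_case; auto.
  intros x [Hx Hb]. destruct (Rle_dec (x j) mid).
  - apply (HP x d1). apply H1'. split; auto. intros i Hi. unfold upd. destruct (Nat.eqb_spec i j). subst.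
    split; [apply Hb; auto|auto]. apply Hb; auto. split. apply Rmin_case; lra. apply Rmin_l.
  - apply (HP x d2). apply H2'. split; auto. intros i Hi. unfold upd. destruct (Nat.eqb_spec i j). subst.
    split; [lra|apply Hb; auto]. apply Hb; auto. split. apply Rmin_case; lra. apply Rmin_r.
Qed.

Lemma halve_j j : (j <= d)%nat -> forall lo hi, ~ good d P lo hi -> (forall i, (i < d)%nat -> lo i <= hi i) ->
  exists lo' hi', ~ good d P lo' hi' /\
   (forall i, (i < d)%nat -> lo i <= lo' i /\ lo' i <= hi' i /\ hi' i <= hi i) /\
   (forall i, (i < j)%nat -> hi' i - lo' i = (hi i - lo i) / 2) /\
   (forall i, (j <= i)%nat -> lo' i = lo i /\ hi' i = hi i).
Proof.
  induction j; intros Hj lo hi Hg Ho.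
  - exists lo, hi. repeat split; auto; try lra; try apply Ho; auto. intros; lia.
  - destruct (IHj ltac:(lia) lo hi Hg Ho) as [lo' [hi' [G1 [G2 [G3 G4]]]]].
    destruct (G4 j ltac:(lia)) as [E1 E2].
    set (mid := (lo' j + hi' j) / 2).
    assert (Hjd : (j < d)%nat) by lia.
    assert (Hmid : lo j <= mid <= hi j) by (destruct (G2 j Hjd) as [? [? ?]]; unfold mid; lra).
    destruct (classic (good d P lo' (upd hi' j mid))) as [HL|HL].
    + assert (HR : ~ good d P (upd lo' j mid) hi') by (intro HR; apply G1; eapply good_union; eauto).
      exists (upd lo' j mid), hi'. split; auto. split; [|split].
      * intros i Hi. unfold upd. destruct (Nat.eqb_spec i j). subst i. destruct (G2 j Hjd) as [? [? ?]]; unfold mid in *; lra. apply G2; auto.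
      * intros i Hi. unfold upd. destruct (Nat.eqb_spec i j). subst i. unfold mid; lra. apply G3; lia.
      * intros i Hi. unfold upd. destruct (Nat.eqb_spec i j). lia. apply G4; lia.
    + exists lo', (upd hi' j mid). split; auto. split; [|split].
      * intros i Hi. unfold upd. destruct (Nat.eqb_spec i j). subst i. destruct (G2 j Hjd) as [? [? ?]]; unfold mid in *; lra. apply G2; auto.
      * intros i Hi. unfold upd. destruct (Nat.eqb_spec i j). subst i. unfold mid; lra. apply G3; lia.
      * intros i Hi. unfold upd. destruct (Nat.eqb_spec i j). lia. apply G4; lia.
Qed.

Lemma pow2_ge n : INR n <= 2 ^ n.
Proof. induction n. simpl; lra. rewrite S_INR. simpl. assert (1 <= 2 ^ n) by (apply pow_R1_Rle; lra). lra. Qed.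

Variable M : R.
Hypothesis HM : 0 <= M.
Let cl : Vec := fun _ => - M.
Let ch : Vec := fun _ => M.

Hypothesis Hloc : forall x, inbox d cl ch x -> exists r, 0 < r /\ exists δ, 0 < δ /\
  forall x', inbox d cl ch x' -> (forall i, (i < d)%nat -> Rabs (x' i - x i) < r) -> P x' δ.

Lemma compact_box : good d P cl ch.
Proof.
  apply NNPP; intro Hbad.
  destruct (choice (fun (b b' : Vec * Vec) => (~ good d P (fst b) (snd b) /\ forall i, (i < d)%nat -> fst b i <= snd b i) ->
     ~ good d P (fst b') (snd b') /\
     (forall i, (i < d)%nat -> fst b i <= fst b' i /\ fst b' i <= snd b' i /\ snd b' i <= snd b i) /\
     (forall i, (i < d)%nat -> snd b' i - fst b' i = (snd b i - fst b i) / 2))) as [f Hf].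
  { intros [lo hi]. destruct (classic (~ good d P lo hi /\ forall i, (i < d)%nat -> lo i <= hi i)) as [[H1 H2]|H].
    - destruct (halve_j d (le_n d) lo hi H1 H2) as [lo' [hi' [A [B [C _]]]]]. exists (lo', hi'). simpl; auto.
    - exists (lo, hi); intros; tauto. }
  set (sq := fun k => Nat.iter k f (cl, ch)).
  assert (Inv : forall k, ~ good d P (fst (sq k)) (snd (sq k)) /\ (forall i, (i < d)%nat -> fst (sq k) i <= snd (sq k) i) /\
     (forall i, (i < d)%nat -> snd (sq k) i - fst (sq k) i = 2 * M / 2 ^ k)).
  { induction k.
    - simpl. split; [exact Hbad|]. split; intros; unfold cl, ch; simpl; [lra|field].
    - destruct IHk as [A [B C]]. change (sq (S k)) with (f (sq k)).
      destruct (Hf (sq k) (conj A B)) as [D [E F]]. split; [exact D|]. split.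
      intros i Hi; destruct (E i Hi) as [_ [? _]]; auto. intros i Hi. rewrite F by auto. rewrite C by auto. simpl. field; apply pow_nonzero; lra. }
  assert (Mon : forall k i, (i < d)%nat -> fst (sq k) i <= fst (sq (S k)) i /\ snd (sq (S k)) i <= snd (sq k) i).
  { intros k i Hi. destruct (Inv k) as [A [B _]]. change (sq (S k)) with (f (sq k)).
    destruct (Hf (sq k) (conj A B)) as [_ [E _]]. specialize (E i Hi); lra. }
  assert (Mon2 : forall k m i, (i < d)%nat -> fst (sq k) i <= fst (sq (k + m)%nat) i /\ snd (sq (k + m)%nat) i <= snd (sq k) i).
  { intros k m i Hi. induction m. rewrite Nat.add_0_r; lra. rewrite Nat.add_succ_r.
    destruct (Mon (k + m)%nat i Hi); lra. }
  assert (Cross : forall k k' i, (i < d)%nat -> fst (sq k') i <= snd (sq k) i).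
  { intros k k' i Hi. destruct (Inv (Nat.max k k')) as [_ [B _]].
    destruct (Mon2 k' (Nat.max k k' - k')%nat i Hi) as [A1 _].
    destruct (Mon2 k (Nat.max k k' - k)%nat i Hi) as [_ A2].
    replace (k' + (Nat.max k k' - k'))%nat with (Nat.max k k') in A1 by lia.
    replace (k + (Nat.max k k' - k))%nat with (Nat.max k k') in A2 by lia.
    specialize (B i Hi). lra. }
  set (xs := fun i => if Nat.ltb i d then Rsup (fun z => exists k, z = fst (sq k) i) else 0).
  assert (Hxs : forall k i, (i < d)%nat -> fst (sq k) i <= xs i <= snd (sq k) i).
  { intros k i Hi. unfold xs. destruct (Nat.ltb_spec i d); [|lia].
    destruct (Rsup_spec (fun z => exists k, z = fst (sq k) i)) as [U L].
    - exists (snd (sq 0%nat) i). intros z [k' ->]. apply Cross; auto.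
    - exists (fst (sq 0%nat) i); exists 0%nat; auto.
    - split. apply U. exists k; auto. apply L. intros z [k' ->]. apply Cross; auto. }
  assert (Hxb : inbox d cl ch xs).
  { split. intros i Hi; unfold xs; destruct (Nat.ltb_spec i d); auto; lia.
    intros i Hi. apply (Hxs 0%nat i Hi). }
  destruct (Hloc xs Hxb) as [r [Hr [δ [Hd Hδ]]]].
  destruct (archimed_cor1 (r / (2 * M + 1))) as [K [HK1 HK2]].
  { apply Rdiv_lt_0_compat; lra. }
  assert (HK : 2 * M / 2 ^ K < r).
  { assert (0 < INR K) by (apply lt_0_INR; auto). pose proof (pow2_ge K).
    assert (0 < 2 ^ K) by (apply pow_lt; lra).
    apply Rmult_lt_compat_r with (r := INR K * (2 * M + 1)) in HK1; [|nra].
    replace (/ INR K * (INR K * (2 * M + 1))) with (2 * M + 1) in HK1 by (field; lra).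
    replace (r / (2 * M + 1) * (INR K * (2 * M + 1))) with (r * INR K) in HK1 by (field; lra).
    apply (Rmult_lt_reg_r (2 ^ K)); auto. unfold Rdiv. rewrite Rmult_assoc, Rinv_l by lra. nra. }
  destruct (Inv K) as [Hng [_ Hw]]. apply Hng. exists δ. split; auto.
  intros x [Hx Hb]. apply Hδ.
  - split; auto. intros i Hi. destruct (Hb i Hi). destruct (Mon2 0%nat K i Hi). simpl in *. unfold cl, ch in *. lra.
  - intros i Hi. destruct (Hb i Hi). destruct (Hxs K i Hi). specialize (Hw i Hi).
    apply Rabs_def1; lra.
Qed.
End Compact.


Lemma fin_min d (g : nat -> R) : (forall i, (i < d)%nat -> 0 < g i) -> exists r, 0 < r /\ forall i, (i < d)%nat -> r <= g i.
Proof. induction d; intros H. exists 1; split; intros; lra || lia.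
  destruct IHd as [r [Hr Hr']]. intros; apply H; lia.
  exists (Rmin r (g d)). split. apply Rmin_case; auto.
  intros i Hi. destruct (Nat.eq_dec i d). subst; apply Rmin_r. eapply Rle_trans; [apply Rmin_l|apply Hr'; lia]. Qed.

Lemma fin_argmax d (g : nat -> R) : (0 < d)%nat -> exists j, (j < d)%nat /\ forall i, (i < d)%nat -> g i <= g j.
Proof. induction d; intros H; [lia|]. destruct d. exists 0%nat; split; auto; intros i Hi; replace i with 0%nat by lia; lra.
  destruct IHd as [j [Hj Hj']]; [lia|]. destruct (Rle_dec (g j) (g (S d))).
  exists (S d); split; auto. intros i Hi. destruct (Nat.eq_dec i (S d)). subst; lra. specialize (Hj' i ltac:(lia)); lra.
  exists j; split; [lia|]. intros i Hi. destruct (Nat.eq_dec i (S d)). subst; lra. apply Hj'; lia. Qed.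

Definition ev (i : nat) : Vec := fun j => if Nat.eqb j i then 1 else 0.
Definition trunc (k : nat) (v : Vec) : Vec := fun i => if Nat.ltb i k then v i else 0.

Section NormEq.
Variables (d : nat) (N : Vec -> R) (HN : is_norm d N).

Lemma ev_inRd i : (i < d)%nat -> inRd d (ev i).
Proof. intros H j Hj. unfold ev. destruct (Nat.eqb_spec j i); auto; lia. Qed.

Lemma trunc_inRd k v : inRd d v -> inRd d (trunc k v).
Proof. intros H j Hj. unfold trunc. destruct (Nat.ltb j k); auto. Qed.

Lemma norm_upper : exists K, 0 < K /\ forall v s, inRd d v -> 0 <= s -> (forall i, (i < d)%nat -> Rabs (v i) <= s) -> N v <= K * s.
Proof.
  exists (sumR d (fun i => N (ev i)) + 1). split.
  { pose proof (sumR_nonneg d (fun i => N (ev i))). assert (0 <= sumR d (fun i => N (ev i))); [|lra].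
    apply H. intros; apply (N_nonneg d N HN), ev_inRd; auto. }
  intros v s Hv Hs Hb.
  assert (forall k, (k <= d)%nat -> N (trunc k v) <= s * sumR k (fun i => N (ev i))).
  { induction k; intros Hk.
    - replace (trunc 0 v) with v0 by (vext; unfold trunc; simpl; auto). rewrite (N_v0 d N HN). simpl; lra.
    - replace (trunc (S k) v) with (vadd (trunc k v) (vscal (v k) (ev k))).
      2:{ vext. unfold trunc, ev. destruct (Nat.ltb_spec x k); destruct (Nat.ltb_spec x (S k)); destruct (Nat.eqb_spec x k); try lia; subst; ring. }
      eapply Rle_trans. apply (N_add d N HN). apply trunc_inRd; auto. apply inRd_vscal, ev_inRd; lia.
      rewrite (N_scal d N HN) by (apply ev_inRd; lia). simpl sumR.
      assert (0 <= N (ev k)) by (apply (N_nonneg d N HN), ev_inRd; lia).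
      specialize (IHk ltac:(lia)). specialize (Hb k ltac:(lia)). nra. }
  specialize (H d (le_n d)). replace (trunc d v) with v in H.
  2:{ apply functional_extensionality; intro z. unfold trunc. destruct (Nat.ltb_spec z d) as [Hz|Hz]; [reflexivity|]. rewrite (Hv z) by lia; reflexivity. }
  nra.
Qed.

Lemma norm_lower : exists c, 0 < c /\ forall v i, inRd d v -> (i < d)%nat -> c * Rabs (v i) <= N v.
Proof.
  destruct norm_upper as [K [HK HKv]].
  set (P := fun (v : Vec) (δ : R) => (exists i, (i < d)%nat /\ Rabs (v i) = 1) -> δ <= N v).
  destruct (compact_box d P) with (M := 1) as [δ [Hδ Hδ']].
  { intros x a b H1 H2 H3; specialize (H1 H3); lra. }
  { lra. }
  { intros x [Hx Hb]. destruct (classic (exists i, (i < d)%nat /\ Rabs (x i) = 1)) as [H|H].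
    - assert (Hpos : 0 < N x).
      { apply (N_pos d N HN); auto. intro Hz. destruct H as [i [_ Hi]]. rewrite (Hz i), Rabs_R0 in Hi; lra. }
      exists (N x / (2 * K)). split. apply Rdiv_lt_0_compat; lra. exists (N x / 2). split. lra.
      intros x' [Hx' _] Hc _. pose proof (N_rev d N HN x x' Hx Hx').
      assert (N (vadd x (vscal (-1) x')) <= K * (N x / (2 * K))).
      { apply HKv. apply inRd_vadd; auto; apply inRd_vscal; auto. left; apply Rdiv_lt_0_compat; lra.
        intros i Hi. specialize (Hc i Hi). unfold vadd, vscal. rewrite <- Rabs_Ropp. left. 
        replace (- (x i + -1 * x' i)) with (x' i - x i) by ring. auto. }
      replace (K * (N x / (2 * K))) with (N x / 2) in H1 by (field; lra). lra.
    - destruct (fin_min d (fun i => Rabs (Rabs (x i) - 1))) as [r [Hr Hr']].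
      { intros i Hi. apply Rabs_pos_lt. intro E. apply H. exists i; split; auto; lra. }
      exists r; split; auto. exists 1; split; [lra|]. intros x' _ Hc [i [Hi Hi']].
      exfalso. specialize (Hc i Hi). specialize (Hr' i Hi). pose proof (Rabs_triang_inv (x' i) (x i)).
      pose proof (Rabs_triang_inv (x i) (x' i)). rewrite Rabs_minus_sym in H1.
      rewrite Hi' in *.
      destruct (Rle_dec (Rabs (x i)) 1).
      + rewrite Rabs_left1 in Hr' by lra. lra.
      + rewrite Rabs_right in Hr' by lra. lra. }
  exists δ. split; auto. intros v i Hv Hi.
  destruct (fin_argmax d (fun i => Rabs (v i))) as [j [Hj Hj']]; [lia|].
  assert (Hji := Hj' i Hi). simpl in Hji.
  destruct (Req_dec (Rabs (v j)) 0) as [E|E].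
  { assert (Rabs (v i) = 0) by (pose proof (Rabs_pos (v i)); lra). rewrite H. pose proof (N_nonneg d N HN v Hv); lra. }
  assert (Hs : 0 < Rabs (v j)) by (pose proof (Rabs_pos (v j)); lra).
  assert (HP : P (vscal (/ Rabs (v j)) v) δ).
  { apply Hδ'. split. apply inRd_vscal; auto. intros k Hk. unfold vscal.
    specialize (Hj' k Hk); simpl in Hj'. apply abs_le_between. rewrite Rabs_mult, Rabs_inv, Rabs_Rabsolu.
    apply (Rmult_le_reg_l (Rabs (v j))); auto. rewrite <- Rmult_assoc, Rinv_r by lra. lra. }
  unfold P in HP. rewrite (N_scal d N HN) in HP by auto.
  rewrite Rabs_inv, Rabs_Rabsolu in HP.
  assert (δ <= / Rabs (v j) * N v).
  { apply HP. exists j. split; auto. unfold vscal. rewrite Rabs_mult, Rabs_inv, Rabs_Rabsolu. field; lra. }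
  apply (Rmult_le_compat_l (Rabs (v j))) in H; [|lra].
  rewrite <- Rmult_assoc, Rinv_r, Rmult_1_l in H by lra.
  assert (δ * Rabs (v i) <= δ * Rabs (v j)) by (apply Rmult_le_compat_l; lra). lra.
Qed.
End NormEq.


Lemma sumR_single_le k f i : (forall j, (j < k)%nat -> 0 <= f j) -> (i < k)%nat -> f i <= sumR k f.
Proof. induction k; intros H Hi; [lia|]. simpl. destruct (Nat.eq_dec i k).
  subst. pose proof (sumR_nonneg k f ltac:(intros; apply H; lia)). lra.
  assert (f i <= sumR k f) by (apply IHk; auto; lia). specialize (H k ltac:(lia)). lra. Qed.

Definition amat d (A : Mat) := sumR d (fun i => sumR d (fun j => Rabs (A i j))).

Lemma amat_nonneg d A : 0 <= amat d A.
Proof. apply sumR_nonneg; intros; apply sumR_nonneg; intros; apply Rabs_pos. Qed.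

Lemma mv_bound d A v s : 0 <= s -> (forall j, (j < d)%nat -> Rabs (v j) <= s) ->
  forall i, (i < d)%nat -> Rabs (mv d A v i) <= amat d A * s.
Proof.
  intros Hs Hv i Hi. unfold mv. destruct (Nat.ltb_spec i d); [|lia].
  eapply Rle_trans; [apply sumR_abs|].
  apply Rle_trans with (sumR d (fun j => Rabs (A i j) * s)).
  { apply sumR_le; intros j Hj. rewrite Rabs_mult. apply Rmult_le_compat_l; auto. apply Rabs_pos. }
  rewrite (sumR_ext _ _ (fun j => s * Rabs (A i j))) by (intros; ring). rewrite sumR_scal.
  rewrite Rmult_comm. apply Rmult_le_compat_r; auto. unfold amat.
  apply (sumR_single_le d (fun i => sumR d (fun j => Rabs (A i j)))); auto.
  intros; apply sumR_nonneg; intros; apply Rabs_pos.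
Qed.

Lemma applyw_bound d w : exists C, 0 <= C /\ forall v s, 0 <= s -> (forall j, (j < d)%nat -> Rabs (v j) <= s) ->
  forall i, (i < d)%nat -> Rabs (applyw d w v i) <= C * s.
Proof.
  induction w as [|A w IH].
  - exists 1. split; [lra|]. intros v s Hs Hv i Hi. unfold applyw; simpl. rewrite Rmult_1_l; auto.
  - destruct IH as [C [HC HCw]]. exists (C * amat d A). split. apply Rmult_le_pos; auto; apply amat_nonneg.
    intros v s Hs Hv i Hi. rewrite applyw_cons. rewrite Rmult_assoc. apply HCw; auto.
    apply Rmult_le_pos; auto; apply amat_nonneg. apply mv_bound; auto.
Qed.

Lemma lcomb_bound d l : exists B, 0 <= B /\ forall v s, 0 <= s -> (forall j, (j < d)%nat -> Rabs (v j) <= s) ->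
  forall i, (i < d)%nat -> Rabs (lcomb d l v i) <= B * s.
Proof.
  induction l as [|c l IH].
  - exists 0. split; [lra|]. intros. simpl. unfold v0. rewrite Rabs_R0; lra.
  - destruct IH as [B [HB HBl]]. destruct (applyw_bound d (snd c)) as [C [HC HCw]].
    exists (Rabs (fst c) * C + B). split. pose proof (Rabs_pos (fst c)). nra.
    intros v s Hs Hv i Hi. simpl. unfold vadd, vscal. eapply Rle_trans; [apply Rabs_triang|].
    rewrite Rabs_mult. specialize (HBl v s Hs Hv i Hi). specialize (HCw v s Hs Hv i Hi).
    pose proof (Rabs_pos (fst c)). nra.
Qed.

Lemma fin_bound d (Q : nat -> R -> Prop) : (forall i B B', Q i B -> B <= B' -> Q i B') ->
  (forall i, (i < d)%nat -> exists B, Q i B) -> exists B, 0 <= B /\ forall i, (i < d)%nat -> Q i B.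
Proof.
  intros Hm. induction d; intros H. exists 0; split; [lra|intros; lia].
  destruct IHd as [B [HB0 HB]]. intros; apply H; lia. destruct (H d ltac:(lia)) as [B' HB'].
  exists (Rmax B B'). split. eapply Rle_trans; [exact HB0|apply Rmax_l]. intros i Hi. destruct (Nat.eq_dec i d). subst. eapply Hm; eauto; apply Rmax_r.
  eapply Hm. apply HB; lia. apply Rmax_l.
Qed.

Lemma solve d (f : nat -> Vec) (E : R) : 0 <= E -> INR d * E <= 1 / 2 ->
  (forall i j, (i < d)%nat -> (j < d)%nat -> Rabs (f i j - ev i j) <= E) ->
  (forall i, (i < d)%nat -> inRd d (f i)) ->
  forall y s, inRd d y -> (forall j, (j < d)%nat -> Rabs (y j) <= s) ->
  exists v : nat -> R, (forall j, sumR d (fun i => v i * f i j) = y j) /\ forall i, (i < d)%nat -> Rabs (v i) <= 2 * s.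
Proof.
  intros HE HdE Hf Hfi y s Hy Hs.
  assert (Key : forall (v : nat -> R) t, (forall i, (i < d)%nat -> Rabs (v i) <= t) ->
     forall j, (j < d)%nat -> Rabs (sumR d (fun i => v i * f i j) - v j) <= t / 2).
  { intros v t Hv j Hj. assert (Ht : 0 <= t) by (pose proof (Hv j Hj); pose proof (Rabs_pos (v j)); lra).
    replace (v j) with (sumR d (fun i => v i * ev i j)).
    2:{ rewrite <- (sumR_delta d v j Hj). apply sumR_ext; intros i Hi. unfold ev.
        destruct (Nat.eqb_spec j i); destruct (Nat.eqb_spec i j); auto; lia. }
    replace (sumR d (fun i => v i * f i j) - sumR d (fun i => v i * ev i j)) with
      (sumR d (fun i => v i * (f i j - ev i j))).
    2:{ replace (sumR d (fun i => v i * f i j) - sumR d (fun i => v i * ev i j)) with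
         (sumR d (fun i => v i * f i j) + (-1) * sumR d (fun i => v i * ev i j)) by ring.
        rewrite <- sumR_scal, <- sumR_plus. apply sumR_ext; intros; ring. }
    eapply Rle_trans; [apply sumR_abs|].
    apply Rle_trans with (sumR d (fun _ => t * E)).
    { apply sumR_le; intros i Hi. rewrite Rabs_mult. apply Rmult_le_compat; auto using Rabs_pos. }
    rewrite sumR_const. replace (INR d * (t * E)) with (t * (INR d * E)) by ring. apply Rle_trans with (t * (1/2)); [apply Rmult_le_compat_l; lra|lra]. }
  set (ws := fun k => if Nat.ltb k d then f k else y).
  destruct (dep d (S d) ws) as [b [[k0 [Hk0 Hbk0]] Hb]]. lia.
  { intros k Hk. unfold ws. destruct (Nat.ltb_spec k d); auto. }
  assert (Hsum : forall j, sumR d (fun i => b i * f i j) + b d * y j = 0).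
  { intros j. rewrite <- (Hb j). simpl. unfold ws. destruct (Nat.ltb_spec d d); [lia|]. f_equal.
    apply sumR_ext; intros i Hi. destruct (Nat.ltb_spec i d); [auto|lia]. }
  assert (Hbd : b d <> 0).
  { intro Hz. assert (Hd : (0 < d)%nat). { destruct d; [|lia]. exfalso. replace k0 with 0%nat in Hbk0 by lia. auto. }
    destruct (fin_argmax d (fun i => Rabs (b i)) Hd) as [i0 [Hi0 Hi0']].
    pose proof (Key b (Rabs (b i0)) Hi0' i0 Hi0) as H. specialize (Hsum i0). rewrite Hz in Hsum.
    replace (sumR d (fun i => b i * f i i0)) with 0 in H by lra.
    replace (0 - b i0) with (- b i0) in H by ring. rewrite Rabs_Ropp in H.
    assert (Rabs (b i0) = 0) by (pose proof (Rabs_pos (b i0)); lra).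
    assert (k0 <> d) by (intro; subst; contradiction).
    specialize (Hi0' k0 ltac:(lia)). simpl in Hi0'. apply Hbk0. destruct (Req_dec (b k0) 0) as [?|Hne]; auto. pose proof (Rabs_pos_lt _ Hne). lra. }
  exists (fun i => - b i / b d). split.
  - intros j. specialize (Hsum j).
    rewrite (sumR_ext _ _ (fun i => (- / b d) * (b i * f i j))) by (intros; unfold Rdiv; ring).
    rewrite sumR_scal. replace (sumR d (fun i => b i * f i j)) with (- (b d * y j)) by lra. field; auto.
  - assert (Hd : (0 < d)%nat \/ d = 0%nat) by lia. destruct Hd as [Hd|Hd]; [|intros; lia].
    destruct (fin_argmax d (fun i => Rabs (- b i / b d)) Hd) as [i0 [Hi0 Hi0']]. simpl in Hi0'.
    assert (Hv : forall j, sumR d (fun i => - b i / b d * f i j) = y j).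
    { intros j. specialize (Hsum j).
      rewrite (sumR_ext _ _ (fun i => (- / b d) * (b i * f i j))) by (intros; unfold Rdiv; ring).
      rewrite sumR_scal. replace (sumR d (fun i => b i * f i j)) with (- (b d * y j)) by lra. field; auto. }
    pose proof (Key (fun i => - b i / b d) _ Hi0' i0 Hi0) as H. rewrite Hv in H.
    pose proof (Rabs_triang_inv (- b i0 / b d) (y i0)). rewrite Rabs_minus_sym in H.
    specialize (Hs i0 Hi0). intros i Hi. specialize (Hi0' i Hi). lra.
Qed.


Fixpoint comb (v : nat -> R) (L : nat -> list (R * list Mat)) n :=
  match n with O => nil | S n => comb v L n ++ map (fun c => (v n * fst c, snd c)) (L n) end.

Lemma lcomb_comb d v L n x : lcomb d (comb v L n) x = fun j => sumR n (fun i => v i * lcomb d (L i) x j).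
Proof. induction n; simpl. reflexivity. rewrite lcomb_app, lcomb_scal, IHn. reflexivity. Qed.

Lemma sumabs_comb v L n : sumabs (comb v L n) = sumR n (fun i => Rabs (v i) * sumabs (L i)).
Proof. induction n; simpl. reflexivity. rewrite sumabs_app, sumabs_scal, IHn. reflexivity. Qed.

Lemma Forall_comb (Q : R * list Mat -> Prop) v L n : (forall c, Q c -> forall a, Q (a, snd c)) ->
  (forall i, (i < n)%nat -> Forall Q (L i)) -> Forall Q (comb v L n).
Proof. intros HQ; induction n; intros H; simpl. constructor. apply Forall_app; split. apply IHn; intros; apply H; lia.
  apply Forall_map. eapply Forall_impl; [|apply H; lia]. intros c Hc. apply HQ; auto. Qed.

Section Unif.
Variables (d : nat) (As : list Mat) (p : nat) (N : Vec -> R).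
Hypotheses (Hirr : irreducible d As) (HN : is_norm d N) (Hp : (d - 1 <= p)%nat).

Lemma local_good xs : inRd d xs -> N xs = 1 -> exists r, 0 < r /\ exists δ, 0 < δ /\
  forall x', inRd d x' -> (forall i, (i < d)%nat -> Rabs (x' i - xs i) < r) ->
  forall y, inRd d y -> (forall j, (j < d)%nat -> Rabs (y j) <= δ) -> in_conv (orbit_pm d As p x') y.
Proof.
  intros Hxs HN1.
  assert (Hx0 : ~ vzero xs).
  { intro Hz. replace xs with v0 in HN1 by (apply functional_extensionality; intro i; symmetry; apply Hz).
    rewrite (N_v0 d N HN) in HN1; lra. }
  destruct (spanning d As xs Hxs p Hirr Hp Hx0) as [k [Hk Hsp]].
  destruct (choice (fun i l => (i < d)%nat -> Forall (fun c => word_of As (snd c) /\ (length (snd c) <= k)%nat) l /\ ev i = lcomb d l xs)) as [L HL].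
  { intros i. destruct (Nat.lt_ge_cases i d) as [Hi|Hi].
    - destruct (Hsp (ev i) (ev_inRd d i Hi)) as [_ [l [H1 H2]]]. exists l; auto.
    - exists nil; intros; lia. }
  destruct (fin_bound d (fun i B => 0 <= B /\ forall v s, 0 <= s -> (forall j, (j < d)%nat -> Rabs (v j) <= s) ->
      forall j, (j < d)%nat -> Rabs (lcomb d (L i) v j) <= B * s)) as [B [HB0 HB]].
  { intros i B B' [H1 H2] H3. split. lra. intros v s Hs Hv j Hj. specialize (H2 v s Hs Hv j Hj). assert (B * s <= B' * s) by (apply Rmult_le_compat_r; lra). lra. }
  { intros i Hi. destruct (lcomb_bound d (L i)) as [B [H1 H2]]. exists B; auto. }
  set (Ct := sumR d (fun i => sumabs (L i)) + 1).
  assert (HCt : 1 <= Ct) by (unfold Ct; pose proof (sumR_nonneg d (fun i => sumabs (L i)) (fun j _ => sumabs_nonneg (L j))); lra).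
  assert (Hd0 : 0 <= INR d) by apply pos_INR.
  exists (/ (2 * (INR d * B + 1))). split. apply Rinv_0_lt_compat; nra.
  exists (/ (2 * Ct)). split. apply Rinv_0_lt_compat; lra.
  intros x' Hx' Hc y Hy Hyb.
  set (r := / (2 * (INR d * B + 1))).
  assert (Hr : 0 < r) by (apply Rinv_0_lt_compat; nra).
  destruct (solve d (fun i => lcomb d (L i) x') (B * r)) with (y := y) (s := / (2 * Ct)) as [v [Hv1 Hv2]].
  - nra.
  - unfold r. replace (INR d * (B * / (2 * (INR d * B + 1)))) with ((INR d * B) / (2 * (INR d * B + 1))) by (field; nra).
    apply Rmult_le_reg_r with (2 * (INR d * B + 1)). nra. unfold Rdiv. rewrite Rmult_assoc, Rinv_l by nra. nra.
  - intros i j Hi Hj. destruct (HL i Hi) as [_ HLi]. rewrite HLi.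
    replace (lcomb d (L i) x' j - lcomb d (L i) xs j) with (lcomb d (L i) (vadd x' (vscal (-1) xs)) j).
    2:{ rewrite lcomb_addx, lcomb_scalx. unfold vadd, vscal. ring. }
    destruct (HB i Hi) as [_ HBi]. apply HBi. lra.
    intros j' Hj'. specialize (Hc j' Hj'). unfold vadd, vscal. replace (x' j' + -1 * xs j') with (x' j' - xs j') by ring. unfold r; lra. auto.
  - intros i Hi. apply lcomb_inRd; auto.
  - auto.
  - auto.
  - replace y with (lcomb d (comb v L d) x').
    2:{ rewrite lcomb_comb. apply functional_extensionality; intro j. apply Hv1. }
    apply conv_builder; auto.
    + apply Forall_comb. intros c [H1 H2] a; simpl; auto.
      intros i Hi. destruct (HL i Hi) as [H _]. eapply Forall_impl; [|exact H]. intros c [H1 H2]; split; auto; lia.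
    + rewrite sumabs_comb.
      apply Rle_trans with (sumR d (fun i => (2 * / (2 * Ct)) * sumabs (L i))).
      { apply sumR_le. intros i Hi. apply Rmult_le_compat_r. apply sumabs_nonneg. auto. }
      rewrite sumR_scal. unfold Ct in *. 
      replace (2 * / (2 * (sumR d (fun i => sumabs (L i)) + 1))) with (/ (sumR d (fun i => sumabs (L i)) + 1)) by (field; lra).
      apply Rmult_le_reg_l with (sumR d (fun i => sumabs (L i)) + 1). lra.
      rewrite <- Rmult_assoc, Rinv_r by lra. lra.
Qed.

Lemma uniform_radius : exists t0, 0 < t0 /\ forall x, inRd d x -> N x = 1 ->
  forall y, inRd d y -> N y <= t0 -> in_conv (orbit_pm d As p x) y.
Proof.
  destruct (norm_lower d N HN) as [c [Hc Hcl]].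
  destruct (norm_upper d N HN) as [K [HK HKu]].
  set (P := fun x' δ => N x' = 1 -> forall y, inRd d y -> (forall j, (j < d)%nat -> Rabs (y j) <= δ) -> in_conv (orbit_pm d As p x') y).
  destruct (compact_box d P) with (M := / c) as [δ [Hδ Hδ']].
  { intros x a b H1 H2 H3 y Hy Hyb. apply H1; auto. intros j Hj; specialize (Hyb j Hj); lra. }
  { left; apply Rinv_0_lt_compat; auto. }
  { intros x [Hx _]. destruct (Req_dec (N x) 1) as [E|E].
    - destruct (local_good x Hx E) as [r [Hr [δ [Hδ H]]]]. exists r; split; auto. exists δ; split; auto.
      intros x' [Hx' _] Hc' _. apply H; auto.
    - assert (Hpos : 0 < Rabs (N x - 1)) by (apply Rabs_pos_lt; lra).
      exists (Rabs (N x - 1) / (2 * K)). split. apply Rdiv_lt_0_compat; lra. exists 1. split. lra.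
      intros x' [Hx' _] Hc' E'. exfalso.
      assert (H1 : N (vadd x (vscal (-1) x')) <= K * (Rabs (N x - 1) / (2 * K))).
      { apply HKu. apply inRd_vadd; auto; apply inRd_vscal; auto. left; apply Rdiv_lt_0_compat; lra.
        intros i Hi. specialize (Hc' i Hi). unfold vadd, vscal. rewrite <- Rabs_Ropp.
        replace (- (x i + -1 * x' i)) with (x' i - x i) by ring. lra. }
      assert (H2 : N (vadd x' (vscal (-1) x)) <= K * (Rabs (N x - 1) / (2 * K))).
      { apply HKu. apply inRd_vadd; auto; apply inRd_vscal; auto. left; apply Rdiv_lt_0_compat; lra.
        intros i Hi. specialize (Hc' i Hi). unfold vadd, vscal.
        replace (x' i + -1 * x i) with (x' i - x i) by ring. lra. }
      replace (K * (Rabs (N x - 1) / (2 * K))) with (Rabs (N x - 1) / 2) in H1, H2 by (field; lra).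
      pose proof (N_rev d N HN x x' Hx Hx'). pose proof (N_rev d N HN x' x Hx' Hx).
      rewrite E' in *. destruct (Rle_dec (N x) 1).
      + rewrite Rabs_left1 in * by lra. lra.
      + rewrite Rabs_right in * by lra. lra. }
  exists (c * δ). split. nra.
  intros x Hx HNx y Hy HNy. apply (Hδ' x); auto.
  - split; auto. intros i Hi. specialize (Hcl x i Hx Hi). rewrite HNx in Hcl.
    apply abs_le_between. apply Rmult_le_reg_l with c; auto. rewrite Rinv_r by lra. lra.
  - intros j Hj. specialize (Hcl y j Hy Hj). apply Rmult_le_reg_l with c; auto. lra.
Qed.
End Unif.


Lemma power_ineq (mu rho : R) (n p k : nat) : 1 < mu -> 0 <= rho -> (1 <= n)%nat -> (k <= p)%nat ->
  (Rpower mu (/ INR (n + p)) * rho) ^ (k + n) <= mu * Rmax 1 (rho ^ p) * rho ^ n.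
Proof.
  intros Hmu Hr Hn Hk. rewrite Rpow_mult_distr, (pow_add rho).
  assert (HnP : 0 < INR (n + p)) by (apply lt_0_INR; lia).
  assert (Ha : Rpower mu (/ INR (n + p)) ^ (k + n) <= mu).
  { rewrite <- Rpower_pow by (unfold Rpower; apply exp_pos). rewrite Rpower_mult.
    rewrite <- (Rpower_1 mu) at 2 by lra. apply Rle_Rpower; [lra|].
    apply Rmult_le_reg_l with (INR (n + p)); auto. rewrite <- Rmult_assoc, Rinv_r, Rmult_1_l, Rmult_1_r by lra.
    apply le_INR; lia. }
  assert (Hb : rho ^ k <= Rmax 1 (rho ^ p)).
  { destruct (Rle_dec rho 1).
    - eapply Rle_trans; [|apply Rmax_l]. rewrite <- (pow1 k). apply pow_incr; lra.
    - eapply Rle_trans; [|apply Rmax_r]. apply Rle_pow; lra || lia. }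
  assert (0 <= Rpower mu (/ INR (n + p)) ^ (k + n)) by (apply pow_le; left; unfold Rpower; apply exp_pos).
  assert (0 <= rho ^ k) by (apply pow_le; auto).
  assert (0 <= rho ^ n) by (apply pow_le; auto).
  assert (Rpower mu (/ INR (n + p)) ^ (k + n) * rho ^ k <= mu * Rmax 1 (rho ^ p)) by (apply Rmult_le_compat; auto).
  rewrite <- Rmult_assoc. apply Rmult_le_compat_r; auto.
Qed.

Theorem lemma3 (d : nat) (As : list Mat) (N : Vec -> R) (p n : nat) (mu : R) :
  irreducible d As -> is_norm d N ->
  (d - 1 <= p)%nat -> (1 <= n)%nat -> 1 < mu ->
  (exists (w : list Mat) (xs : Vec),
      word_of As w /\ length w = n /\ inRd d xs /\ ~ vzero xs /\
      N (applyw d w xs) >= mu * eta_p d N As p * jsr d N As ^ n * N xs) ->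
  forall x : Vec, inRd d x -> ~ vzero x ->
    exists F : list Mat,
      word_of As F /\ (n <= length F <= n + p)%nat /\
      N (applyw d F x) >=
        (Rpower mu (/ INR (n + p)) * jsr d N As) ^ (length F) * N x.
Proof.
  intros Hirr HN Hp Hn Hmu [w [xs [Hw [Hlw [Hxs [Hxs0 Hhyp]]]]]] x Hx Hx0.
  pose proof (jsr_nonneg d N As) as Hrho. set (rho := jsr d N As) in *.
  destruct (uniform_radius d As p N Hirr HN Hp) as [t0 [Ht0 Hunif]].
  set (setx := fun v => fun t => 0 <= t /\ forall y, inRd d y -> N y <= t -> in_conv (orbit_pm d As p v) y).
  assert (Hbound : forall v, inRd d v -> N v = 1 -> bound (setx v)).
  { intros v Hv HNv. destruct (words_max As p (fun G => N (applyw d G v))) as [G [_ [_ HG]]].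
    exists (N (applyw d G v)). intros t [Ht Hty].
    assert (Hc : in_conv (orbit_pm d As p v) (vscal t v)).
    { apply Hty. apply inRd_vscal; auto. rewrite (N_scal d N HN) by auto. rewrite HNv, Rabs_right; lra. }
    pose proof (hull_bound d As p N HN v nil _ Hv HG _ Hc) as H. change (applyw d nil (vscal t v)) with (vscal t v) in H.
    rewrite (N_scal d N HN), HNv, Rabs_right in H by (auto; lra). lra. }
  assert (Hin0 : forall v, inRd d v -> N v = 1 -> setx v t0).
  { intros v Hv HNv. split. lra. intros y Hy Hny. apply Hunif; auto. }
  assert (Hlub : forall v, inRd d v -> N v = 1 -> is_lub (setx v) (Rsup (setx v))).
  { intros v Hv HNv. apply Rsup_spec; auto. exists t0; auto. }
  assert (HNx : 0 < N x) by (apply (N_pos d N HN); auto).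
  set (u := vscal (/ N x) x).
  assert (Hu : inRd d u) by (apply inRd_vscal; auto).
  assert (HNu : N u = 1).
  { unfold u. rewrite (N_scal d N HN) by auto. rewrite Rabs_right. field; lra. left; apply Rinv_0_lt_compat; auto. }
  set (chi0 := chi d N As p).
  assert (Hchi : t0 <= chi0 /\ chi0 <= Rsup (setx u)).
  { unfold chi0, chi, Rinf. set (E := fun c : R => _).
    assert (HE : is_lub E (Rsup E)).
    { apply Rsup_spec.
      - exists (- t0). intros c [v [Hv [HNv Hc]]]. destruct (Hlub v Hv HNv) as [U _].
        specialize (U t0 (Hin0 v Hv HNv)). fold (setx v) in Hc. lra.
      - exists (- Rsup (setx u)). exists u. split; auto. split; auto. rewrite Ropp_involutive. reflexivity. }
    destruct HE as [U L]. split.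
    - assert (Rsup E <= - t0).
      { apply L. intros c [v [Hv [HNv Hc]]]. destruct (Hlub v Hv HNv) as [U' _].
        specialize (U' t0 (Hin0 v Hv HNv)). fold (setx v) in Hc. lra. }
      lra.
    - assert (- Rsup (setx u) <= Rsup E).
      { apply U. exists u. split; auto. split; auto. rewrite Ropp_involutive. reflexivity. }
      lra. }
  assert (Hchi0 : 0 < chi0) by lra.
  destruct (words_max As p (fun G => N (applyw d w (applyw d G u)))) as [G [HGw [HGl HG]]].
  set (Mu := N (applyw d w (applyw d G u))).
  set (A := N (applyw d w xs)).
  assert (HNxs : 0 < N xs) by (apply (N_pos d N HN); auto).
  assert (HA : 0 <= A) by (apply (N_nonneg d N HN), applyw_inRd; auto).
  assert (Hkey : chi0 * A <= Mu * N xs).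
  { apply Rnot_lt_le. intro Hlt.
    assert (HApos : 0 < A).
    { destruct HA as [HA|HA]; auto. rewrite <- HA in Hlt. rewrite Rmult_0_r in Hlt.
      assert (0 <= Mu) by (apply (N_nonneg d N HN), applyw_inRd, applyw_inRd; auto). nra. }
    set (eps := (chi0 * A - Mu * N xs) / A).
    assert (Heps : 0 < eps) by (apply Rdiv_lt_0_compat; lra).
    destruct (Hlub u Hu HNu) as [U L].
    assert (Hex : exists t, setx u t /\ Rsup (setx u) - eps < t).
    { apply NNPP; intro Hne. assert (Rsup (setx u) <= Rsup (setx u) - eps); [|lra].
      apply L. intros t Ht. apply Rnot_lt_le. intro Hlt'. apply Hne. exists t; auto. }
    destruct Hex as [t [[Ht Hty] Htgt]].
    assert (Hc : in_conv (orbit_pm d As p u) (vscal (t / N xs) xs)).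
    { apply Hty. apply inRd_vscal; auto. rewrite (N_scal d N HN) by auto.
      rewrite Rabs_right. right; field; lra. apply Rle_ge; unfold Rdiv; apply Rmult_le_pos; [lra|left; apply Rinv_0_lt_compat; lra]. }
    pose proof (hull_bound d As p N HN u w Mu Hu (fun G' H1 H2 => HG G' H1 H2) _ Hc) as H.
    rewrite applyw_scal, (N_scal d N HN) in H by (apply applyw_inRd; auto).
    rewrite Rabs_right in H by (apply Rle_ge; unfold Rdiv; apply Rmult_le_pos; [lra|left; apply Rinv_0_lt_compat; lra]). fold A in H.
    assert (t * A <= Mu * N xs).
    { apply Rmult_le_reg_r with (/ N xs). apply Rinv_0_lt_compat; auto.
      replace (Mu * N xs * / N xs) with Mu by (field; lra). unfold Rdiv in H. lra. }
    assert (t * A > (chi0 - eps) * A) by (apply Rmult_gt_compat_r; lra).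
    unfold eps in H1. replace ((chi0 - (chi0 * A - Mu * N xs) / A) * A) with (Mu * N xs) in H1 by (field; lra).
    lra. }
  exists (G ++ w). split; [|split].
  - intros B HB. apply in_app_or in HB. destruct HB; auto.
  - rewrite length_app. lia.
  - rewrite length_app, applyw_app.
    replace x with (vscal (N x) u) at 1 by (unfold u, vscal; apply functional_extensionality; intro i; field; lra).
    rewrite applyw_scal, applyw_scal, (N_scal d N HN) by (apply applyw_inRd, applyw_inRd; auto).
    fold Mu. rewrite Rabs_right by lra.
    assert (Hmain : mu * Rmax 1 (rho ^ p) * rho ^ n <= Mu).
    { unfold eta_p in Hhyp. fold rho chi0 A in Hhyp.
      assert (chi0 * (mu * (Rmax 1 (rho ^ p) / chi0) * rho ^ n * N xs) <= chi0 * A)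
        by (apply Rmult_le_compat_l; lra).
      replace (chi0 * (mu * (Rmax 1 (rho ^ p) / chi0) * rho ^ n * N xs)) with (mu * Rmax 1 (rho ^ p) * rho ^ n * N xs) in H by (field; lra).
      apply Rmult_le_reg_r with (N xs); auto. lra. }
    pose proof (power_ineq mu rho n p (length G) Hmu Hrho Hn HGl). rewrite Hlw.
    apply Rle_ge. rewrite Rmult_comm. apply Rmult_le_compat_l; lra.
Qed.
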